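(* Inner p-transitivity fails in general: there exist a language $L$, an $L$-algebra $\mathfrak A$ with universe $A$, and elements $a,b,c,d,e,f\in A$ such that $a:b\approx_{\mathfrak A}c:d$ and $b:e\approx_{\mathfrak A}d:f$ hold, but $a:e\approx_{\mathfrak A}c:f$ does not hold.
   Context: Let $L$ be a language of algebras: a set of function symbols, each with an arity in $\mathbb N$ (constants are 0-ary function symbols). Fix a countably infinite set $X$ of variables; $T_{L,X}$ is the set of $L$-terms over $X$, and $X(s)$ denotes the set of variables occurring in a term $s$. For an $L$-algebra $\mathfrak A$ with universe $A$, every term $s$ induces a function $s^{\mathfrak A}$, evaluated at assignments of elements of $A$ to variables. An arrow of $\mathfrak A$ is a pair $(a,b)\in A\times A$, written $a\to b$. The generalizations of an arrow $a\to b$ in $\mathfrak A$ are the pairs of arbitrary terms $s\to t$ with $s,t\in T_{L,X}$ such that there is an assignment $\sigma$ of elements of $A$ to the variables in $X(s)\cup X(t)$ with $s^{\mathfrak A}(\sigma)=a$ and $t^{\mathfrak A}(\sigma)=b$; their set is denoted $\uparrow_{\mathfrak A}(a\to b)$. For $L$-algebras $\mathfrak A,\mathfrak B$, an arrow $a\to b$ of $\mathfrak A$ and an arrow $c\to d$ of $\mathfrak B$, set $(a\to b)\uparrow_{(\mathfrak A,\mathfrak B)}(c\to d):=\uparrow_{\mathfrak A}(a\to b)\cap\uparrow_{\mathfrak B}(c\to d)$. A pair of terms $s\to t$ is trivial in $(\mathfrak A,\mathfrak B)$ if it belongs to $\uparrow_{\mathfrak A}(e)$ for every arrow $e$ of $\mathfrak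 A$ and to $\uparrow_{\mathfrak B}(e')$ for every arrow $e'$ of $\mathfrak B$. We write $a\to b\lesssim_{(\mathfrak A,\mathfrak B)}c\to d$ iff either (i) every element of $\uparrow_{\mathfrak A}(a\to b)\cup\uparrow_{\mathfrak B}(c\to d)$ is trivial in $(\mathfrak A,\mathfrak B)$, or (ii) $(a\to b)\uparrow_{(\mathfrak A,\mathfrak B)}(c\to d)$ contains an element not trivial in $(\mathfrak A,\mathfrak B)$ and, for every arrow $c'\to d'$ of $\mathfrak B$, the inclusion $(a\to b)\uparrow_{(\mathfrak A,\mathfrak B)}(c\to d)\subseteq(a\to b)\uparrow_{(\mathfrak A,\mathfrak B)}(c'\to d')$ implies equality of these two sets. Define $a\to b\approx_{(\mathfrak A,\mathfrak B)}c\to d$ iff $a\to b\lesssim_{(\mathfrak A,\mathfrak B)}c\to d$ and $c\to d\lesssim_{(\mathfrak B,\mathfrak A)}a\to b$. For $a,b\in A$ and $c,d\in B$, the similarity-based analogical proportion $a:b\approx_{(\mathfrak A,\mathfrak B)}c:d$ holds iff $a\to b\approx_{(\mathfrak A,\mathfrak B)}c\to d$ and $b\to a\approx_{(\mathfrak A,\mathfrak B)}d\to c$. We write $\approx_{\mathfrak A}$ for $\approx_{(\mathfrak A,\mathfrak A)}$. *)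

(* Defs.v *)
From mathcomp Require Import all_boot.
Set Implicit Arguments. Unset Strict Implicit. Unset Printing Implicit Defensive.

Record language := Language { sym : Type; arity : sym -> nat }.

Inductive term (L : language) : Type :=
| Var : nat -> term L
| App : forall f : sym L, ('I_(arity f) -> term L) -> term L.

Record algebra (L : language) := Algebra {
  carrier :> Type;
  interp : forall f : sym L, ('I_(arity f) -> carrier) -> carrier }.

Fixpoint eval (L : language) (A : algebra L) (sigma : nat -> A) (t : term L) : A :=
  match t with
  | Var x => sigma x
  | App g ts => @interp L A g (fun i => @eval L A sigma (ts i))
  end.

Definition gen (L : language) (A : algebra L) (a b : A) (s t : term L) : Prop :=
  exists sigma : nat -> A, eval sigma s = a /\ eval sigma t = b.

Definition common_gen (L : language) (A B : algebra L) (a b : A) (c d : B)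
  (s t : term L) : Prop := gen a b s t /\ gen c d s t.

Definition trivial_in (L : language) (A B : algebra L) (s t : term L) : Prop :=
  (forall a b : A, gen a b s t) /\ (forall c d : B, gen c d s t).

Definition lesssim (L : language) (A B : algebra L) (a b : A) (c d : B) : Prop :=
  (forall s t, gen a b s t \/ gen c d s t -> trivial_in A B s t)
  \/
  ((exists s t, common_gen a b c d s t /\ ~ trivial_in A B s t) /\
   forall c' d' : B,
     (forall s t, common_gen a b c d s t -> common_gen a b c' d' s t) ->
     (forall s t, common_gen a b c' d' s t -> common_gen a b c d s t)).

Definition arrow_approx (L : language) (A B : algebra L) (a b : A) (c d : B) : Prop :=
  lesssim a b c d /\ lesssim c d a b.

Definition analogy (L : language) (A B : algebra L) (a b : A) (c d : B) : Prop :=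
  arrow_approx a b c d /\ arrow_approx b a d c.

(* Main.v *)
Require Import Defs.
From mathcomp Require Import all_boot.

Definition L0 : language := @Language Empty_set (fun _ => 0).
Definition A0 : algebra L0 := @Algebra L0 nat (fun f _ => match f with end).

Lemma term_var (t : term L0) : exists x, t = Var L0 x.
Proof. destruct t as [x|f ts]; [by exists x | destruct f]. Qed.

Lemma gen_var (a b : A0) x y : gen a b (Var L0 x) (Var L0 y) <-> (x = y -> a = b).
Proof.
split.
- move=> [sigma [/= <- <-]] ->; reflexivity.
- move=> H; exists (fun z => if z == x then a else b) => /=.
  rewrite eqxx; split => //.
  case: eqP => [E|//]; exact: H (esym E).
Qed.

Lemma lesssim_neq (a b c d : A0) : a <> b -> c <> d -> lesssim a b c d.
Proof.
move=> ab cd; left=> s t.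
have [x ->] := term_var s; have [y ->] := term_var t; move=> H.
have xy : x <> y.
  move=> E; case: H => H; have {}H := proj1 (gen_var _ _ _ _) H; [exact: ab (H E) | exact: cd (H E)].
split=> ? ?; apply (proj2 (gen_var _ _ _ _)) => E; by case: (xy E).
Qed.

Lemma not_lesssim : ~ @lesssim L0 A0 A0 0 0 0 2.
Proof.
case.
- move=> H; have [H1 _] := H (Var L0 0) (Var L0 0) (or_introl (proj2 (gen_var _ _ _ _) (fun _ => erefl))).
  by have := proj1 (gen_var _ _ _ _) (H1 0 1) erefl.
- move=> [[s [t [[_ H2] Hn]]] _].
  have [x Es] := term_var s; have [y Et] := term_var t; subst.
  have xy : x <> y by move=> E; subst; have := proj1 (gen_var _ _ _ _) H2 erefl.
  apply: Hn; split=> ? ?; apply (proj2 (gen_var _ _ _ _)) => E; by case: (xy E).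
Qed.

Theorem theorem3 :
  exists (L : language) (A : algebra L) (a b c d e f : A),
    analogy a b c d /\ analogy b e d f /\ ~ analogy a e c f.
Proof.
exists L0, A0, 0, 1, 0, 1, 0, 2.
split; [|split].
- by split; split; apply: lesssim_neq.
- by split; split; apply: lesssim_neq.
- by move=> [[H _] _]; apply: not_lesssim.
Qed.
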